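(* Let $H\ge2$ be fixed and assume the ranking mechanism is consistent. (i) If $K_n\xrightarrow{w}e$, then $\mathbb E(F_{n;jps}(t))\to F(t)$ as $n\to\infty$ for every continuity point $t$ of $F$. (ii) Conversely, if for every population CDF $F$ (with any consistent ranking mechanism) one has $\mathbb E(F_{n;jps}(t))\to F(t)$ as $n\to\infty$ at every continuity point $t$ of $F$, then $K_n\xrightarrow{w}e$. Thus estimators of the form $F_{n;jps}$ are asymptotically unbiased if and only if $K_n\xrightarrow{w}e$.
   Context: Setting (judgment post stratification, JPS). Fix an integer set size $H\ge 2$ and a sample size $n\ge 1$. A JPS sample is a collection of $n$ i.i.d. pairs $(X_1,R_1),\dots,(X_n,R_n)$, where $R_i\in\{1,\dots,H\}$ with $P(R_i=r)=1/H$ for each $r$, and conditionally on $R_i=r$ the real random variable $X_i$ has CDF $F_{[r]}$. Let $F$ be the population CDF. The ranking mechanism is called consistent if $F(t)=\frac1H\sum_{r=1}^H F_{[r]}(t)$ for all $t\in\mathbb R$. Define $I_{ir}=\mathbb I(R_i=r)$, $N_r=\sum_{i=1}^n I_{ir}$, $d_n=\sum_{r=1}^H\mathbb I(N_r>0)$, and $W_r=\mathbb I(N_r>0)/d_n$. Given a sequence of CDFs $(K_n)_{n\ge1}$ on $\mathbb R$, define $F_{n;[r]}(t)=\frac1{N_r}\sum_{i=1}^n K_n(t-X_i)I_{ir}$ if $N_r>0$ and $F_{n;[r]}(t)=0$ otherwise, and $F_{n;jps}(t)=\sum_{r=1}^H W_rF_{n;[r]}(t)$. Let $e(t)=\mathbb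 I(t\ge0)$. For CDFs $G_n,G$, $G_n\xrightarrow{w}G$ means $G_n(t)\to G(t)$ as $n\to\infty$ for every continuity point $t$ of $G$. *)

(* Defs.v *)
From HB Require Import structures.
From mathcomp Require Import all_boot all_order all_algebra.
From mathcomp Require Import all_classical all_reals all_analysis.
Set Implicit Arguments. Unset Strict Implicit. Unset Printing Implicit Defensive.
Import Order.TTheory GRing.Theory Num.Theory.
Import numFieldNormedType.Exports.
Local Open Scope classical_set_scope.
Local Open Scope ring_scope.

Definition isCDF (R : realType) (G : R -> R) : Prop :=
  [/\ (forall x y : R, x <= y -> G x <= G y),
      (forall x : R, G y @[y --> x^'+] --> G x),
      G x @[x --> -oo] --> (0 : R) &
      G x @[x --> +oo] --> (1 : R)].

Definition estep (R : realType) (t : R) : R := if 0 <= t then 1 else 0.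

Definition weak_conv (R : realType) (G : nat -> R -> R) (G0 : R -> R) : Prop :=
  forall t : R, {for t, continuous G0} -> G n t @[n --> \oo] --> G0 t.

(* A JPS sample of size n with set size H on the probability space (T,P):
   pairs (X i, Rk i), i < n, which are mutually independent and identically
   distributed with P(R_i = r, X_i <= x) = F_[r](x) / H (so that P(R_i = r) = 1/H
   and, given R_i = r, X_i has CDF F_[r]). Independence is the product rule
   for all events {X_i \in B_i, R_i \in S_i} (B_i Borel, S_i any set of ranks),
   which form a pi-system generating sigma(X_i, R_i). *)
Definition JPS_sample (R : realType) (d : measure_display) (T : measurableType d)
  (P : probability T R) (H n : nat) (Fr : 'I_H -> R -> R)
  (X : 'I_n -> T -> R) (Rk : 'I_n -> T -> 'I_H) : Prop :=
  [/\ (forall i, measurable_fun setT (X i)),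
      (forall i (r : 'I_H), measurable [set w | Rk i w = r]),
      (forall i (r : 'I_H) (x : R),
          P ([set w | Rk i w = r] `&` [set w | X i w <= x])
          = ((H%:R)^-1 * Fr r x)%:E) &
      (forall (B : 'I_n -> set R) (S : 'I_n -> set 'I_H),
          (forall i, measurable (B i)) ->
          P (\bigcap_(i in [set: 'I_n]) [set w | B i (X i w) /\ S i (Rk i w)])
          = (\prod_(i < n) P [set w | B i (X i w) /\ S i (Rk i w)])%E)].

Definition Ncount (T : Type) (H n : nat) (Rk : 'I_n -> T -> 'I_H) (w : T) (r : 'I_H) : nat :=
  \sum_(i < n) (Rk i w == r).

Definition dcount (T : Type) (H n : nat) (Rk : 'I_n -> T -> 'I_H) (w : T) : nat :=
  \sum_(r < H) (0 < Ncount Rk w r)%N.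

Definition Wjps (R : realType) (T : Type) (H n : nat) (Rk : 'I_n -> T -> 'I_H)
  (w : T) (r : 'I_H) : R :=
  if (0 < Ncount Rk w r)%N then ((dcount Rk w)%:R)^-1 else 0.

Definition Fstratum (R : realType) (T : Type) (H n : nat) (Kn : R -> R)
  (X : 'I_n -> T -> R) (Rk : 'I_n -> T -> 'I_H) (r : 'I_H) (t : R) (w : T) : R :=
  if (0 < Ncount Rk w r)%N then
    ((Ncount Rk w r)%:R)^-1 *
      \sum_(i < n) (Kn (t - X i w) * (Rk i w == r)%:R)
  else 0.

Definition Fjps (R : realType) (T : Type) (H n : nat) (Kn : R -> R)
  (X : 'I_n -> T -> R) (Rk : 'I_n -> T -> 'I_H) (t : R) (w : T) : R :=
  \sum_(r < H) Wjps R Rk w r * Fstratum Kn X Rk r t w.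

Definition jps_asymptotically_unbiased (R : realType) (H : nat) (K : nat -> R -> R) : Prop :=
  forall (F : R -> R) (Fr : 'I_H -> R -> R),
    isCDF F -> (forall r, isCDF (Fr r)) ->
    (forall t : R, F t = (H%:R)^-1 * \sum_(r < H) Fr r t) ->
    forall (d : nat -> measure_display) (T : forall n, measurableType (d n))
           (P : forall n, probability (T n) R)
           (X : forall n, 'I_n -> T n -> R) (Rk : forall n, 'I_n -> T n -> 'I_H),
      (forall n, JPS_sample (P n) Fr (X n) (Rk n)) ->
      forall t : R, {for t, continuous F} ->
        ('E_(P n)[Fjps (K n) (X n) (Rk n) t])%E @[n --> \oo] --> (F t)%:E.

(* Main.v *)
Require Import Defs.
From HB Require Import structures.
From mathcomp Require Import all_boot all_order all_algebra.
From mathcomp Require Import all_classical all_reals all_analysis.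
From mathcomp Require Import fingroup perm.
From mathcomp Require Import lra.
Import Order.TTheory GRing.Theory Num.Theory.
Import numFieldNormedType.Exports.
Local Open Scope classical_set_scope.
Local Open Scope ring_scope.
Set Implicit Arguments. Unset Strict Implicit. Unset Printing Implicit Defensive.

Section Alg.
Variables (R : realType) (H n : nat).
Implicit Types (f : {ffun 'I_n -> 'I_H}) (phi : 'I_n -> R).

Definition Nr f (r : 'I_H) : nat := \sum_(i < n) (f i == r).
Definition dr f : nat := \sum_(r < H) (0 < Nr f r)%N.
Definition Wr f r : R := if (0 < Nr f r)%N then ((dr f)%:R)^-1 else 0.
Definition Sr f phi r : R :=
  if (0 < Nr f r)%N then ((Nr f r)%:R)^-1 * \sum_(i < n) (phi i * (f i == r)%:R) else 0.
Definition Fg f phi : R := \sum_(r < H) Wr f r * Sr f phi r.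

Lemma Wr_ge0 f r : 0 <= Wr f r.
Proof. by rewrite /Wr; case: ifP. Qed.

Lemma Sr_le f phi psi r : (forall i, phi i <= psi i) -> Sr f phi r <= Sr f psi r.
Proof.
move=> le; rewrite /Sr; case: ifP => // _; rewrite ler_wpM2l ?invr_ge0 //.
apply: ler_sum => i _; rewrite ler_wpM2r //.
Qed.

Lemma Fg_le f phi psi : (forall i, phi i <= psi i) -> Fg f phi <= Fg f psi.
Proof.
move=> le; apply: ler_sum => r _; rewrite ler_wpM2l ?Wr_ge0 //; exact: Sr_le.
Qed.

Lemma sum_ind f r : \sum_(i < n) ((f i == r)%:R : R) = (Nr f r)%:R.
Proof. by rewrite /Nr natr_sum. Qed.

Lemma Sr_lin f phi a b r :
  Sr f (fun i => a * phi i + b) r = a * Sr f phi r + (if (0 < Nr f r)%N then b else 0).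
Proof.
rewrite /Sr; case: ifP => [N0|]; last by rewrite mulr0 addr0.
under eq_bigr do rewrite mulrDl.
rewrite big_split /= -big_distrr /= sum_ind.
under eq_bigr do rewrite -mulrA.
rewrite -big_distrr /= mulrDr mulrCA; congr (_ + _).
by rewrite mulrCA mulVf ?mulr1 // pnatr_eq0 -lt0n.
Qed.

Lemma Wsum f : (0 < n)%N -> \sum_(r < H) Wr f r = 1.
Proof.
move=> n0.
have dpos : (0 < dr f)%N.
  rewrite /dr (bigD1 (f (Ordinal n0))) //= /Nr (bigD1 (Ordinal n0)) //= eqxx.
  by rewrite add1n.
rewrite /Wr (eq_bigr (fun r => ((0 < Nr f r)%N)%:R * (dr f)%:R^-1)); last first.
  by move=> r _; case: ifP; rewrite ?mul1r ?mul0r.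
rewrite -big_distrl /= -natr_sum mulfV // pnatr_eq0 -lt0n //.
Qed.

Lemma Fg_lin f phi a b : (0 < n)%N ->
  Fg f (fun i => a * phi i + b) = a * Fg f phi + b.
Proof.
move=> n0; rewrite /Fg.
under eq_bigr do rewrite Sr_lin mulrDr.
rewrite big_split /=; congr (_ + _).
  by rewrite big_distrr /=; apply: eq_bigr => r _; rewrite mulrCA.
rewrite -[b in RHS]mulr1 -(Wsum f n0) big_distrr /=; apply: eq_bigr => r _.
by rewrite /Wr; case: ifP; rewrite ?mulr0 ?mul0r // mulrC.
Qed.

Lemma Fg_cst f b : (0 < n)%N -> Fg f (fun _ => b) = b.
Proof.
move=> n0; rewrite -[RHS](_ : 0 * Fg f (fun _ => 0) + b = b); last by rewrite mul0r add0r.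
rewrite -Fg_lin //; congr Fg; apply/funext => i; by rewrite mul0r add0r.
Qed.

Lemma Fg_comp f (g : 'I_H -> R) : Fg f (fun i => g (f i)) = \sum_(r < H) Wr f r * g r.
Proof.
apply: eq_bigr => r _; rewrite /Sr /Wr; case: ifP => N0; last by rewrite !mul0r.
congr (_ * _).
rewrite (eq_bigr (fun i => g r * (f i == r)%:R)); last first.
  by move=> i _; case: eqP => [->|]; rewrite ?mulr0.
rewrite -big_distrr /= sum_ind mulrCA mulVf ?mulr1 // pnatr_eq0 -lt0n //.
Qed.

Definition cw f (i : 'I_n) : R := Wr f (f i) * ((Nr f (f i))%:R)^-1.

Lemma Fg_dec f phi : Fg f phi = \sum_(i < n) cw f i * phi i.
Proof.
rewrite /Fg (eq_bigr (fun r => \sum_(i < n) Wr f r * (Nr f r)%:R^-1 * (phi i * (f i == r)%:R))); last first.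
  move=> r _; rewrite -big_distrr /= /Sr /Wr; case: ifP => _; rewrite ?mulrA //.
  by rewrite !mul0r.
rewrite exchange_big /=; apply: eq_bigr => i _.
rewrite (bigD1 (f i)) //= eqxx mulr1 big1 ?addr0 /cw ?mulrA //.
by move=> r /negbTE rn; rewrite eq_sym rn mulr0 mulr0.
Qed.

Lemma cw_ge0 f i : 0 <= cw f i.
Proof. by rewrite /cw mulr_ge0 ?Wr_ge0 ?invr_ge0. Qed.

End Alg.

Section Sym.
Variables (R : realType) (H n : nat).

Definition permf (s : {perm 'I_H}) (f : {ffun 'I_n -> 'I_H}) : {ffun 'I_n -> 'I_H} :=
  [ffun i => s (f i)].

Lemma Nr_perm s f r : Nr (permf s f) (s r) = Nr f r.
Proof. by apply: eq_bigr => i _; rewrite ffunE (inj_eq perm_inj). Qed.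

Lemma dr_perm s f : dr (permf s f) = dr f.
Proof.
rewrite /dr (reindex_inj (@perm_inj _ s)) /=.
by apply: eq_bigr => r _; rewrite Nr_perm.
Qed.

Lemma Wr_perm s f r : Wr R (permf s f) (s r) = Wr R f r.
Proof. by rewrite /Wr Nr_perm dr_perm. Qed.

Lemma sumW_sym (r r' : 'I_H) :
  \sum_(f : {ffun 'I_n -> 'I_H}) Wr R f r' = \sum_(f : {ffun 'I_n -> 'I_H}) Wr R f r.
Proof.
have inj : injective (permf (tperm r r')).
  apply: (can_inj (g := permf (tperm r r'))) => f; apply/ffunP => i.
  by rewrite !ffunE tpermK.
rewrite (reindex_inj inj) /=; apply: eq_bigr => f _.
by rewrite -[X in Wr R _ X](tpermL r r') Wr_perm.
Qed.

Lemma sumW (r : 'I_H) : (0 < n)%N ->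
  \sum_(f : {ffun 'I_n -> 'I_H}) Wr R f r = (H ^ n)%:R / H%:R.
Proof.
move=> n0.
have H0 : (0 < H)%N by case: r => m /=; case: H => //.
have : \sum_(r' < H) \sum_(f : {ffun 'I_n -> 'I_H}) Wr R f r' = (H ^ n)%:R.
  rewrite exchange_big /= (eq_bigr (fun _ => 1)); last by move=> f _; rewrite Wsum.
  by rewrite sumr_const card_ffun !card_ord.
rewrite (eq_bigr (fun _ => \sum_(f : {ffun 'I_n -> 'I_H}) Wr R f r)); last first.
  by move=> r' _; rewrite (sumW_sym r).
rewrite sumr_const card_ord => <-.
by rewrite -[(_ *+ H)]mulr_natr mulfK // pnatr_eq0 -lt0n.
Qed.

Lemma sum_ffun_prod (g : 'I_n -> 'I_H -> R) :
  \sum_(f : {ffun 'I_n -> 'I_H}) \prod_(i < n) g i (f i) = \prod_(i < n) \sum_(j < H) g i j.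
Proof. by rewrite bigA_distr_bigA. Qed.

Lemma sum_ffun_one (i0 : 'I_n) (g : 'I_H -> R) :
  \sum_(f : {ffun 'I_n -> 'I_H}) g (f i0) = (H ^ n.-1)%:R * \sum_(j < H) g j.
Proof.
have E := sum_ffun_prod (fun i j => if i == i0 then g j else 1).
have E2 : \prod_(i < n) \sum_(j < H) (if i == i0 then g j else 1) =
   (H ^ n.-1)%:R * \sum_(j < H) g j.
  rewrite (bigD1 i0) //= eqxx mulrC; congr (_ * _).
  rewrite (eq_bigr (fun _ => H%:R)); last first.
    by move=> i /negbTE ->; rewrite sumr_const card_ord.
  by rewrite prodr_const cardC1 card_ord natrX.
rewrite -E2 -E; apply: eq_bigr => f _.
by rewrite (bigD1 i0) //= eqxx big1 ?mulr1 // => i /negbTE ->.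
Qed.
End Sym.

Section CDF.
Variable R : realType.

Lemma cdf_le1 (G : R -> R) x : isCDF G -> G x <= 1.
Proof.
case=> mono _ _ h1.
have := @limr_ge _ (pinfty_nbhs R) _ R (G x) G (cvgP _ h1).
rewrite (cvg_lim _ h1) //; apply.
near=> y; apply: mono; near: y; exact: nbhs_pinfty_ge (num_real _).
Unshelve. all: by end_near. Qed.

Lemma cdf_ge0 (G : R -> R) x : isCDF G -> 0 <= G x.
Proof.
case=> mono _ h0 _.
have := @limr_le _ (ninfty_nbhs R) _ R (G x) G (cvgP _ h0).
rewrite (cvg_lim _ h0) //; apply.
near=> y; apply: mono; near: y; exact: nbhs_ninfty_le (num_real _).
Unshelve. all: by end_near. Qed.

Lemma estep_cont (x : R) : x != 0 -> {for x, continuous (@estep R)}.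
Proof.
move=> x0.
have : \forall y \near x, estep y = estep x.
  have [xlt|xgt|xe] := ltgtP x 0; last by rewrite xe eqxx in x0.
    have -> : estep x = 0 by rewrite /estep leNgt xlt.
    near=> y; rewrite /estep ifF //; apply/negbTE; rewrite -ltNge.
    by near: y; exact: lt_nbhsl xlt.
  have -> : estep x = 1 by rewrite /estep ltW.
  near=> y; rewrite /estep ifT //; apply: ltW.
  by near: y; exact: lt_nbhsr xgt.
move=> e.
have e' : \forall y \near x, cst (estep x) y = estep y by apply: filterS e => y ->.
apply: cvg_trans (near_eq_cvg e') _; exact: cvg_cst.
Unshelve. all: by end_near. Qed.

End CDF.

Definition rv (T : Type) (H n : nat) (Rk : 'I_n -> T -> 'I_H) (w : T) : {ffun 'I_n -> 'I_H} :=
  [ffun i => Rk i w].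

Section Meas.
Variables (R : realType) (d : measure_display) (T : measurableType d)
  (P : probability T R) (H n : nat) (Fr : 'I_H -> R -> R)
  (X : 'I_n -> T -> R) (Rk : 'I_n -> T -> 'I_H).
Hypothesis HJ : JPS_sample P Fr X Rk.
Hypothesis HFr : forall r, isCDF (Fr r).

Lemma mX i : measurable_fun setT (X i).
Proof. by case: HJ. Qed.

Lemma mRk i r : measurable [set w | Rk i w = r].
Proof. by case: HJ => _ h _ _; exact: h. Qed.

Lemma mXle i x : measurable [set w | X i w <= x].
Proof.
have := mX i measurableT (measurable_itv `]-oo, x]).
rewrite setTI; congr measurable; apply/seteqP; split => w /=; rewrite in_itv //=.
Qed.

Lemma P_rank i r : P [set w | Rk i w = r] = ((H%:R)^-1)%:E.
Proof.
pose F k := [set w | Rk i w = r] `&` [set w | X i w <= k%:R].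
have mF k : measurable (F k) by apply: measurableI; [exact: mRk|exact: mXle].
have UF : \bigcup_k F k = [set w | Rk i w = r].
  apply/seteqP; split => w /=; first by case=> k _ [].
  move=> rw; exists (Num.Def.archi_bound (X i w)) => //; split => //.
  exact/ltW/unstable.ltr_bound.
have ndF : nondecreasing_seq F.
  move=> k m km; apply/subsetPset => w [rw le]; split => //; apply: (le_trans le).
  by rewrite ler_nat.
have := @nondecreasing_cvg_mu _ _ R P _ mF; rewrite UF => /(_ (mRk i r) ndF) h1.
have h2 : P \o F @ \oo --> ((H%:R)^-1 * 1)%:E.
  have -> : P \o F = fun k => ((H%:R)^-1 * Fr r k%:R)%:E.
    apply/funext => k; rewrite /= /F.
    by case: HJ => _ _ h _; rewrite h.
  apply: cvg_EFin; first exact: nearW.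
  apply: cvgMr; case: (HFr r) => _ _ _ h.
  exact: (cvg_comp _ _ cvgr_idn h).
rewrite mulr1 in h2; exact: (cvg_unique _ h1 h2).
Qed.

Definition Aset (f : {ffun 'I_n -> 'I_H}) := [set w | forall j, Rk j w = f j].
Definition Xle i s := [set w | X i w <= s].

Lemma mAset f : measurable (Aset f).
Proof.
have -> : Aset f = \bigcap_(j in [set: 'I_n]) [set w | Rk j w = f j].
  apply/seteqP; split => w; rewrite /Aset /bigcap /=.
    by move=> h j _; exact: h.
  by move=> h j; exact: h.
apply: fin_bigcap_measurable; first exact: finite_finset.
by move=> j _; exact: mRk.
Qed.

Lemma mAX f i s : measurable (Aset f `&` Xle i s).
Proof. by apply: measurableI; [exact: mAset|exact: mXle]. Qed.

Lemma P_AX f i s : P (Aset f `&` Xle i s) = ((((H%:R)^-1)^+n) * Fr (f i) s)%:E.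
Proof.
pose B j : set R := if j == i then [set x : R | x <= s] else setT.
pose S j : set 'I_H := [set f j].
have E : Aset f `&` Xle i s =
    \bigcap_(j in [set: 'I_n]) [set w | B j (X j w) /\ S j (Rk j w)].
  apply/seteqP; split => w /=.
    case=> Af le j _; rewrite /B /S /=; split; last exact: Af.
    by case: eqP => // ->.
  move=> h; split; first by move=> j; have [_ ->] := h j I.
  by have [] := h i I; rewrite /B eqxx.
have mB j : measurable (B j).
  rewrite /B; case: eqP => _ //.
  have -> : [set x : R | x <= s] = `]-oo, s]%classic.
    by apply/seteqP; split => x /=; rewrite in_itv.
  exact: measurable_itv.
case: HJ => _ _ h3 h4.
rewrite E h4 //.
rewrite (eq_bigr (fun j => (if j == i then (H%:R)^-1 * Fr (f i) s else (H%:R)^-1)%:E)); last first.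
  move=> j _; rewrite /B /S; case: eqP => [->|_].
    rewrite -(h3 i (f i) s); congr (P _); apply/seteqP; split => w /=; by case.
  rewrite -(P_rank j (f j)); congr (P _); apply/seteqP; split => w /=; first by case.
  by move=> ->.
rewrite prodEFin; congr (_%:E).
rewrite (bigD1 i) //= eqxx (eq_bigr (fun _ => (H%:R)^-1)); last by move=> j /negbTE ->.
rewrite prodr_const cardC1 card_ord mulrAC -exprS.
by rewrite prednK // (leq_ltn_trans (leq0n i) (ltn_ord i)).
Qed.

End Meas.

Section Exp.
Variables (R : realType) (d : measure_display) (T : measurableType d)
  (P : probability T R) (H n : nat) (Fr : 'I_H -> R -> R)
  (X : 'I_n -> T -> R) (Rk : 'I_n -> T -> 'I_H).
Hypothesis HJ : JPS_sample P Fr X Rk.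
Hypothesis HFr : forall r, isCDF (Fr r).

Lemma Fg_ind (a b s : R) (w : T) :
  a * Fg (rv Rk w) (fun i => (X i w <= s)%R%:R) + b =
  \sum_(f : {ffun 'I_n -> 'I_H}) \sum_(i < n)
     (a * cw R f i) * \1_(Aset Rk f `&` Xle X i s) w + b.
Proof.
congr (_ + _); rewrite Fg_dec big_distrr /=.
rewrite [RHS](bigD1 (rv Rk w)) //= [X in _ + X]big1 ?addr0.
  apply: eq_bigr => i _; rewrite mulrA indicE; congr (_ * _).
  case: (boolP (X i w <= s)) => h.
    by rewrite mem_set //; split; [move=> j; rewrite /rv ffunE|exact: h].
  by rewrite memNset //; case=> _ /=; apply/negP.
move=> f fw; apply: big1 => i _; rewrite indicE memNset ?mulr0 //.
case=> /= Af _; move/eqP: fw; apply; apply/ffunP => j; rewrite ffunE; exact: (esym (Af j)).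
Qed.

Lemma PAXm c f i s : (c%:E * P (Aset Rk f `&` Xle X i s) =
  (c * ((((H%:R)^-1)^+n) * Fr (f i) s))%:E)%E.
Proof. by rewrite (P_AX HJ HFr). Qed.

Lemma E_lin (a b s : R) : 0 <= a -> 0 <= b -> (0 < n)%N ->
  ('E_P[(fun w => a * Fg (rv Rk w) (fun i => (X i w <= s)%R%:R) + b)%R])%E =
  (a * ((H%:R)^-1 * \sum_(r < H) Fr r s) + b)%:E.
Proof.
move=> a0 b0 n0.
rewrite unlock.
under eq_integral do rewrite Fg_ind EFinD.
rewrite ge0_integralD //; last 2 first.
- move=> w _; rewrite lee_fin; apply: sumr_ge0 => f _; apply: sumr_ge0 => i _.
  by rewrite mulr_ge0 ?indic_ge0 // mulr_ge0 // cw_ge0.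
- apply/measurable_realfun.measurable_EFinP; apply: measurable_sum => f; apply: measurable_sum => i.
  apply: measurable_realfun.measurable_funM; first exact: (measurable_cst (a * cw R f i)).
  by apply: measurable_realfun.measurable_indic; exact: (mAX HJ).
rewrite integral_cst //.
have P1 : forall x, (x%:E * P [set: T] = x%:E)%E.
  move=> x; rewrite probability_setT; exact: mule1.
rewrite P1.
under eq_integral do rewrite -sumEFin.
rewrite ge0_integral_sum //; last 2 first.
- move=> f; apply/measurable_realfun.measurable_EFinP; apply: measurable_sum => i.
  apply: measurable_realfun.measurable_funM; first exact: measurable_cst.
  by apply: measurable_realfun.measurable_indic; exact: (mAX HJ).
- move=> f w _; rewrite lee_fin; apply: sumr_ge0 => i _.
  by rewrite mulr_ge0 ?indic_ge0 // mulr_ge0 // cw_ge0.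
under eq_bigr => f _.
  under eq_integral do rewrite -sumEFin.
  rewrite ge0_integral_sum //; last 2 first.
  - move=> i; apply/measurable_realfun.measurable_EFinP.
    apply: measurable_realfun.measurable_funM; first exact: measurable_cst.
    by apply: measurable_realfun.measurable_indic; exact: (mAX HJ).
  - move=> i w _; rewrite lee_fin.
    by rewrite mulr_ge0 ?indic_ge0 // mulr_ge0 // cw_ge0.
  under eq_bigr => i _.
    rewrite (@integralZl_indic _ _ _ _ _ measurableT (fun _ => Aset Rk f `&` Xle X i s)) //; last exact: (mAX HJ).
    - rewrite integral_indic ?setIT ?PAXm //; last exact: (mAX HJ).
      over.
    - by move=> /=; rewrite ltNge mulr_ge0 ?cw_ge0.
  over.
under eq_bigr do rewrite sumEFin.
rewrite sumEFin -EFinD; congr ((_ + _)%:E).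
transitivity (a * (H%:R^-1 ^+ n) * \sum_(f : {ffun 'I_n -> 'I_H}) Fg f (fun i => Fr (f i) s)).
  rewrite big_distrr; apply: eq_bigr => f _; rewrite Fg_dec big_distrr.
  apply: eq_bigr => i _ /=; rewrite !mulrA; congr (_ * _).
  by rewrite -!mulrA; congr (_ * _); rewrite mulrA mulrC.
under eq_bigr do rewrite (Fg_comp _ (fun r => Fr r s)).
rewrite exchange_big /= !big_distrr; apply: eq_bigr => r _ /=.
rewrite (eq_bigr (fun f => Fr r s * Wr R f r)); last by move=> f _; rewrite mulrC.
rewrite -big_distrr /= sumW //.
have Hp : (0 < H)%N by case: r => m /=; case: (H).
have hq : (H%:R^-1 : R) ^+ n * (H%:R) ^+ n = 1.
  by rewrite -exprMn mulVf ?expr1n // pnatr_eq0 -lt0n.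
rewrite -mulrA natrX; congr (_ * _).
by rewrite mulrCA (mulrA (H%:R^-1 ^+ n)) hq mul1r mulrC.
Qed.

Lemma mFg (phi : 'I_n -> T -> R) : (forall i, measurable_fun setT (phi i)) ->
  measurable_fun setT (fun w => Fg (rv Rk w) (fun i => phi i w)).
Proof.
move=> mphi.
have -> : (fun w => Fg (rv Rk w) (fun i => phi i w)) =
    (fun w => \sum_(f : {ffun 'I_n -> 'I_H}) \1_(Aset Rk f) w * \sum_(i < n) cw R f i * phi i w).
  apply/funext => w; rewrite Fg_dec [RHS](bigD1 (rv Rk w)) //= [X in _ + X]big1 ?addr0.
    rewrite indicE mem_set ?mul1r //= => j; by rewrite ffunE.
  move=> f fw; rewrite indicE memNset ?mul0r //= => Af.
  move/eqP: fw; apply; apply/ffunP => j; rewrite ffunE; exact: (esym (Af j)).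
apply: measurable_sum => f; apply: measurable_realfun.measurable_funM.
  by apply: measurable_realfun.measurable_indic; exact: (mAset HJ).
by apply: measurable_sum => i; apply: measurable_realfun.measurable_funM => //.
Qed.

Lemma mFgle (a b s : R) :
  measurable_fun setT (fun w => a * Fg (rv Rk w) (fun i => (X i w <= s)%R%:R) + b).
Proof.
apply: measurable_realfun.measurable_funD; last exact: measurable_cst.
apply: measurable_realfun.measurable_funM; first exact: measurable_cst.
apply: (mFg (phi := fun i w => (X i w <= s)%R%:R)) => i.
have -> : (fun w => ((X i w <= s)%R%:R : R)) = \1_(Xle X i s).
  apply/funext => w; rewrite indicE.
  case: (boolP (X i w <= s)) => h; first by rewrite mem_set.
  by rewrite memNset //; apply/negP.
by apply: measurable_realfun.measurable_indic; exact: (mXle HJ).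
Qed.

End Exp.

Lemma Fjps_Fg (R : realType) (T : Type) (H n : nat) (Kn : R -> R)
  (X : 'I_n -> T -> R) (Rk : 'I_n -> T -> 'I_H) t w :
  Fjps Kn X Rk t w = Fg (rv Rk w) (fun i => Kn (t - X i w)).
Proof.
have EN r : Ncount Rk w r = Nr (rv Rk w) r.
  by apply: eq_bigr => i _; rewrite ffunE.
have Ed : dcount Rk w = dr (rv Rk w).
  by apply: eq_bigr => r _; rewrite EN.
apply: eq_bigr => r _; rewrite /Wjps /Wr /Fstratum /Sr EN Ed; congr (_ * _).
case: ifP => // _; congr (_ * _); apply: eq_bigr => i _; by rewrite ffunE.
Qed.


Section Dir1.
Variables (R : realType) (d : measure_display) (T : measurableType d)
  (P : probability T R) (H n : nat) (Fr : 'I_H -> R -> R)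
  (X : 'I_n -> T -> R) (Rk : 'I_n -> T -> 'I_H) (Kn : R -> R).
Hypothesis HJ : JPS_sample P Fr X Rk.
Hypothesis HFr : forall r, isCDF (Fr r).
Hypothesis HK : isCDF Kn.

Lemma mFj t : measurable_fun setT (Fjps Kn X Rk t).
Proof.
have -> : Fjps Kn X Rk t = (fun w => Fg (rv Rk w) (fun i => Kn (t - X i w))).
  by apply/funext => w; rewrite Fjps_Fg.
apply: (mFg HJ (phi := fun i w => Kn (t - X i w))) => i.
apply: (measurableT_comp (f := Kn) (g := fun w => t - X i w)).
  by apply: measurable_realfun.nondecreasing_measurable => //; case: HK.
apply: measurable_realfun.measurable_funB; first exact: measurable_cst.
exact: (mX HJ).
Qed.

Lemma Fj_ge0 t w : 0 <= Fjps Kn X Rk t w.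
Proof.
rewrite Fjps_Fg /Fg; apply: sumr_ge0 => r _; rewrite mulr_ge0 ?Wr_ge0 //.
rewrite /Sr; case: ifP => // _; rewrite mulr_ge0 ?invr_ge0 //.
apply: sumr_ge0 => i _; rewrite mulr_ge0 //; exact: cdf_ge0.
Qed.

Lemma E_lo t del : (0 < n)%N -> 0 < del ->
  ((Kn del * ((H%:R)^-1 * \sum_(r < H) Fr r (t - del)))%:E <= 'E_P[Fjps Kn X Rk t])%E.
Proof.
move=> n0 d0.
have K0 : 0 <= Kn del by exact: cdf_ge0.
rewrite -[X in (X%:E <= _)%E]addr0 -(E_lin HJ HFr (t - del) K0 (lexx 0) n0).
apply: expectation_le.
- exact: (mFgle HJ).
- exact: mFj.
- move=> w; rewrite addr0 mulr_ge0 //.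
  rewrite /Fg; apply: sumr_ge0 => r _; rewrite mulr_ge0 ?Wr_ge0 //.
  rewrite /Sr; case: ifP => // _; rewrite mulr_ge0 ?invr_ge0 //.
  by apply: sumr_ge0 => i _; rewrite mulr_ge0.
- exact: Fj_ge0.
apply: aeW => w; rewrite Fjps_Fg -Fg_lin //; apply: Fg_le => i.
rewrite addr0; case: (boolP (X i w <= t - del)) => h.
  rewrite mulr1; case: HK => mono _ _ _; apply: mono.
  by rewrite lerBrDr addrC -lerBrDr.
by rewrite mulr0; exact: cdf_ge0.
Qed.

Lemma E_hi t del : (0 < n)%N -> 0 < del ->
  ('E_P[Fjps Kn X Rk t] <= (1 * ((H%:R)^-1 * \sum_(r < H) Fr r (t + del)) + Kn (- del))%:E)%E.
Proof.
move=> n0 d0.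
have K0 : 0 <= Kn (- del) by exact: cdf_ge0.
rewrite -(E_lin HJ HFr (t + del) ler01 K0 n0).
apply: expectation_le.
- exact: mFj.
- exact: (mFgle HJ).
- exact: Fj_ge0.
- move=> w; rewrite addr_ge0 // mulr_ge0 //.
  rewrite /Fg; apply: sumr_ge0 => r _; rewrite mulr_ge0 ?Wr_ge0 //.
  rewrite /Sr; case: ifP => // _; rewrite mulr_ge0 ?invr_ge0 //.
  by apply: sumr_ge0 => i _; rewrite mulr_ge0.
apply: aeW => w; rewrite Fjps_Fg -Fg_lin //; apply: Fg_le => i.
rewrite mul1r; case: (boolP (X i w <= t + del)) => h.
  by rewrite -[Kn _]addr0 lerD ?(cdf_le1 _ HK).
rewrite add0r; case: HK => mono _ _ _; apply: mono.
by rewrite lerBlDr addrC -lerBlDr opprK ltW // ltNge.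
Qed.
End Dir1.

Lemma dir1 (R : realType) (H : nat) (K : nat -> R -> R) :
  (forall n, isCDF (K n)) -> weak_conv K (@estep R) -> jps_asymptotically_unbiased H K.
Proof.
move=> HK wK F Fr HF HFr cons d T P X Rk HJ t Ft.
set E := fun n => ('E_(P n)[Fjps (K n) (X n) (Rk n) t])%E.
have lo n del : (0 < n)%N -> 0 < del -> ((K n del * F (t - del))%:E <= E n)%E.
  by move=> n0 d0; rewrite cons; exact: (E_lo (HJ n) HFr (HK n)).
have hi n del : (0 < n)%N -> 0 < del -> (E n <= (F (t + del) + K n (- del))%:E)%E.
  by move=> n0 d0; rewrite cons -[_ * _ in X in (_ <= X%:E)%E]mul1r; exact: (E_hi (HJ n) HFr (HK n)).
have fin n : (0 < n)%N -> E n \is a fin_num.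
  move=> n0; rewrite fin_numElt; apply/andP; split.
    by apply: (lt_le_trans _ (lo n 1 n0 ltr01)); exact: ltNyr.
  by apply: (le_lt_trans (hi n 1 n0 ltr01)); exact: ltry.
apply/fine_cvgP; split.
  by exists 1%N => // m /= m1; exact: fin.
apply/cvgrPdist_lt => e e0.
have e20 : 0 < e / 2 by rewrite divr_gt0.
move/cvgrPdist_lt: Ft => /(_ (e / 2) e20) /nbhs_ballP [del /= del0 hdel].
pose dl := del / 2.
have dl0 : 0 < dl by rewrite divr_gt0.
have dll : dl < del by rewrite /dl ltr_pdivrMr // ltr_pMr // ltr1n.
have F1 : `|F t - F (t - dl)| < e / 2.
  apply: hdel; rewrite -ball_normE /ball_ /= opprB addrC subrK gtr0_norm //.
have F2 : `|F t - F (t + dl)| < e / 2.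
  apply: hdel; rewrite -ball_normE /ball_ /= opprD addNKr normrN gtr0_norm //.
have K1 := wK dl (estep_cont (negbT (gt_eqF dl0))).
have ndl : - dl < 0 by rewrite oppr_lt0.
have K2 := wK (- dl) (estep_cont (negbT (lt_eqF ndl))).
rewrite /estep ltW // in K1.
rewrite /estep lerNr oppr0 leNgt dl0 /= in K2.
move/cvgrPdist_lt: K1 => /(_ (e / 2) e20) K1'.
move/cvgrPdist_lt: K2 => /(_ (e / 2) e20) K2'.
near=> n.
have n0 : (0 < n)%N by near: n; exists 1%N.
have k1 : `|1 - K n dl| < e / 2 by near: n.
have k2 : `|0 - K n (- dl)| < e / 2 by near: n.
have Eu : E n = (fine (E n))%:E by rewrite fineK // fin.
have l := lo n dl n0 dl0; have h := hi n dl n0 dl0.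
rewrite Eu lee_fin in l; rewrite Eu lee_fin in h.
rewrite /comp; set u := fine (E n) in l h *.
have Fa := cdf_le1 (t - dl) HF; have Fb := cdf_ge0 (t - dl) HF.
have Ka := cdf_le1 dl (HK n).
have pr : (1 - K n dl) * F (t - dl) <= 1 - K n dl by rewrite ler_piMr // subr_ge0.
rewrite mulrBl mul1r in pr.
move: k1 k2 F1 F2; rewrite !ltr_distlC => /andP[k1a k1b] /andP[k2a k2b] /andP[f1a f1b] /andP[f2a f2b].
apply/andP; split; lra.
Unshelve. all: by end_near. Qed.

Definition ftype (n m : nat) : Type := {ffun 'I_n -> 'I_m.+1}.
HB.instance Definition _ n m := Finite.on (ftype n m).
HB.instance Definition _ n m := isPointed.Build (ftype n m) [ffun => ord0].
HB.instance Definition _ n m := @isMeasurable.Build default_measure_display (ftype n m)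
  discrete_measurable discrete_measurable0 discrete_measurableC discrete_measurableU.

Section Unif.
Variables (R : realType) (n m : nat).
Local Open Scope ereal_scope.

Definition cst_u : R := ((m.+1)%:R^-1 ^+ n)%R.
Lemma cst_u_ge0 : (0 <= cst_u)%R.
Proof. by rewrite /cst_u exprn_ge0 // invr_ge0. Qed.
Definition cu : {nonneg R} := NngNum cst_u_ge0.

Definition umu (A : set (ftype n m)) : \bar R :=
  \sum_(f : ftype n m) mscale cu (\d_f) A.

Let umu0 : umu set0 = 0.
Proof. by rewrite /umu big1 // => f _; rewrite measure0. Qed.

Let umu_ge0 B : 0 <= umu B.
Proof. by rewrite /umu; apply: sume_ge0 => f _; exact: measure_ge0. Qed.

Let umu_sigma_additive : semi_sigma_additive umu.
Proof.
move=> F mF tF mUF; rewrite [X in _ --> X](_ : _ =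
    lim ((fun n => \sum_(0 <= i < n) umu (F i)) @ \oo)).
  by apply: is_cvg_ereal_nneg_natsum => k _; exact: umu_ge0.
rewrite nneseries_sum//; apply: eq_bigr => /= i _.
exact: measure_semi_bigcup.
Qed.

HB.instance Definition _ := isMeasure.Build _ _ _ umu
  umu0 umu_ge0 umu_sigma_additive.

Lemma umuE A : umu A = (cst_u * \sum_(f : ftype n m) \1_A f)%:E.
Proof.
rewrite /umu big_distrr /= -sumEFin; apply: eq_bigr => f _.
by rewrite /mscale /= diracE indicE EFinM.
Qed.

Let umu_setT : umu setT = 1.
Proof.
rewrite umuE (eq_bigr (fun _ => 1%R)); last by move=> f _; rewrite indicE in_setT.
rewrite sumr_const card_ffun !card_ord /cst_u.
by rewrite natrX -exprMn mulVf ?expr1n.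
Qed.

HB.instance Definition _ := Measure_isProbability.Build _ _ _ umu umu_setT.

End Unif.

Section JPSU.
Variables (R : realType) (n m : nat).

Lemma sum_ft_one (i0 : 'I_n) (g : 'I_m.+1 -> R) :
  \sum_(f : ftype n m) g (f i0) = (m.+1 ^ n.-1)%:R * \sum_(j < m.+1) g j.
Proof. exact: sum_ffun_one. Qed.

Lemma sum_ft_prod (g : 'I_n -> 'I_m.+1 -> R) :
  \sum_(f : ftype n m) \prod_(i < n) g i (f i) = \prod_(i < n) \sum_(j < m.+1) g i j.
Proof. exact: sum_ffun_prod. Qed.

Lemma cu_one (i0 : 'I_n) : cst_u R n m * (m.+1 ^ n.-1)%:R = (m.+1)%:R^-1.
Proof.
rewrite /cst_u natrX.
have n0 : n = n.-1.+1 by rewrite prednK // (leq_ltn_trans (leq0n i0) (ltn_ord i0)).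
rewrite [in X in X * _]n0 exprS -mulrA -exprMn mulVf ?expr1n ?mulr1 //.
Qed.

Lemma umuPE A : ((@umu R n m : probability (ftype n m) R) A =
  (cst_u R n m * \sum_(f : ftype n m) \1_A f)%:E)%E.
Proof. exact: umuE. Qed.

Lemma JPS_unif : JPS_sample (@umu R n m) (fun _ => @estep R)
  (fun (_ : 'I_n) (_ : ftype n m) => 0) (fun i (f : ftype n m) => f i).
Proof.
split.
- by move=> i; exact: measurable_cst.
- by [].
- move=> i r x; rewrite umuPE.
  rewrite (eq_bigr (fun f : ftype n m => ((f i == r)%:R * estep x)%R)); last first.
    move=> f _; rewrite indicE; case: (boolP (f i == r)) => /eqP h.
      rewrite mul1r /estep; case: ifP => h2; first by rewrite mem_set.
      by rewrite memNset //= => -[_].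
    by rewrite mul0r memNset // => -[].
  rewrite (sum_ft_one i (fun j => ((j == r)%:R * estep x)%R)) mulrA cu_one //.
  congr ((_ * _)%:E); rewrite (bigD1 r) //= eqxx mul1r big1 ?addr0 //.
  by move=> j /negbTE ->; rewrite mul0r.
- move=> B S _.
  pose g i j : R := (`[< B i 0 /\ S i j >])%:R.
  have E1 : forall i, (@umu R n m : probability (ftype n m) R) [set w | B i 0 /\ S i (w i)] = ((m.+1)%:R^-1 * \sum_(j < m.+1) g i j)%:E.
    move=> i; rewrite umuPE -cu_one // -mulrA; congr ((_ * _)%:E).
    rewrite -(sum_ft_one i); apply: eq_bigr => f _; rewrite indicE /g.
    case: (pselect (B i 0 /\ S i (f i))) => h.
      by rewrite mem_set // asboolT.
    by rewrite memNset // asboolF.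
  rewrite (eq_bigr _ (fun i _ => E1 i)) prodEFin umuPE; congr (_%:E).
  rewrite big_split /= prodr_const card_ord -sum_ft_prod /cst_u; congr (_ * _).
  apply: eq_bigr => f _; rewrite indicE /g.
  case: (pselect (forall i, B i 0 /\ S i (f i))) => h.
    rewrite mem_set; last by move=> i _; exact: h.
    by rewrite big1 // => i _; rewrite asboolT.
  rewrite memNset; last by move=> h'; apply: h => i; exact: h' i I.
  have [i hi] : exists i, ~ (B i 0 /\ S i (f i)).
    by apply/existsNP => h'; apply: h.
  by rewrite (bigD1 i) //= asboolF // mul0r.
Qed.
End JPSU.

Lemma estep_cdf (R : realType) : isCDF (@estep R).
Proof.
split.
- move=> x y xy; rewrite /estep; case: ifP => hx; last by case: ifP.
  by rewrite (le_trans hx xy).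
- move=> x; have [hx|xn] := leP 0 x.
    have -> : estep x = 1 by rewrite /estep hx.
    have e' : \forall y \near x^'+, cst (1 : R) y = estep y.
      near=> y; rewrite /= /estep ifT //; apply: (le_trans hx); apply: ltW.
      by near: y; exact: nbhs_right_gt.
    by apply: cvg_trans (near_eq_cvg e') _; exact: cvg_cst.
  have -> : estep x = 0 by rewrite /estep leNgt xn.
  have e' : \forall y \near x^'+, cst (0 : R) y = estep y.
    near=> y; rewrite /= /estep ifF //; apply/negbTE; rewrite -ltNge.
    near: y; apply: nbhs_right_lt; exact: xn.
  by apply: cvg_trans (near_eq_cvg e') _; exact: cvg_cst.
- have e' : \forall y \near -oo, cst (0 : R) y = estep y.
    near=> y; rewrite /= /estep ifF //; apply/negbTE; rewrite -ltNge.
    by near: y; exact: nbhs_ninfty_lt (num_real _).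
  by apply: cvg_trans (near_eq_cvg e') _; exact: cvg_cst.
- have e' : \forall y \near +oo, cst (1 : R) y = estep y.
    near=> y; rewrite /= /estep ifT //.
  by apply: cvg_trans (near_eq_cvg e') _; exact: cvg_cst.
Unshelve. all: by end_near. Qed.

Lemma dir2 (R : realType) (H : nat) (K : nat -> R -> R) :
  (2 <= H)%N -> (forall n, isCDF (K n)) -> jps_asymptotically_unbiased H K ->
  weak_conv K (@estep R).
Proof.
case: H => // m _ HK U t ct.
have cons : forall x : R, estep x = (m.+1%:R)^-1 * \sum_(r < m.+1) estep x.
  by move=> x; rewrite sumr_const card_ord -[estep x *+ _]mulr_natl mulrA mulVf ?mul1r.
have := U (@estep R) (fun _ => @estep R) (estep_cdf R) (fun _ => estep_cdf R) cons
  (fun _ => default_measure_display) (fun n => ftype n m)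
  (fun n => (@umu R n m : probability (ftype n m) R))
  (fun n (_ : 'I_n) (_ : ftype n m) => 0) (fun n i (f : ftype n m) => f i)
  (fun n => JPS_unif R n m) t ct.
move=> /fine_cvgP [_ h].
apply: cvg_trans h; apply: near_eq_cvg.
near=> n.
have n0 : (0 < n)%N by near: n; exists 1%N.
rewrite /= (_ : Fjps _ _ _ _ = cst (K n t)); first by rewrite expectation_cst.
apply/funext => w; rewrite Fjps_Fg /= subr0 Fg_cst //.
Unshelve. all: by end_near. Qed.

Unset Implicit Arguments.
Set Strict Implicit.

Theorem theorem1 (R : realType) (H : nat) (K : nat -> R -> R) :
  (2 <= H)%N -> (forall n, isCDF (K n)) ->
  weak_conv K (@estep R) <-> jps_asymptotically_unbiased H K.
Proof.
move=> H2 HK; split; [exact: dir1 | exact: dir2].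
Qed.
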